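(* Let $u_1, \ldots, u_n, v_1, \ldots, v_m \in \mathcal{L}_s$. Then $\max(u_1, \ldots, u_n) \leqslant_{\mathcal{L}} \max(v_1, \ldots, v_m)$ if and only if for every $i$ there exists $j$ such that $u_i \leqslant_{\mathcal{L}} v_j$.
   Context: $\mathcal{X}$ is a countable set of variables; a valuation is $\sigma\colon\mathcal{X}\to\mathbb{N}$. For finite $E\subseteq\mathcal{X}$, $x\in\mathcal{X}$, $S\in\mathbb{N}$, the sublevels $A(E,x,S)$ and $B(E,S)$ have values $[A(E,x,S)]_\sigma = 0$ if some $y\in E$ has $\sigma(y)=0$, and $\sigma(x)+S$ otherwise; $[B(E,S)]_\sigma=0$ if some $y\in E$ has $\sigma(y)=0$, and $S$ otherwise. $\mathcal{L}_s$ is the set of sublevels $A(E,x,S)$ with $x\in E$ and $B(E,S)$ with $S>0$. $\max$ of a finite family is evaluated pointwise (empty max has value $0$). $t_1\leqslant_{\mathcal{L}} t_2$ means $[t_1]_\sigma\le[t_2]_\sigma$ for every valuation $\sigma$. *)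

(* Defs.v *)
From mathcomp Require Import all_boot.
Set Implicit Arguments. Unset Strict Implicit. Unset Printing Implicit Defensive.

(* Variables: the countable set X is represented by nat. Valuations: nat -> nat. *)
Definition var := nat.
Definition valuation := var -> nat.

(* Sublevels: A(E,x,S) and B(E,S), with E a finite set of variables given as a list. *)
Inductive sublevel :=
| SA : seq var -> var -> nat -> sublevel
| SB : seq var -> nat -> sublevel.

Definition some_zero (sigma : valuation) (E : seq var) : bool :=
  has (fun y => sigma y == 0) E.

Definition eval (sigma : valuation) (t : sublevel) : nat :=
  match t with
  | SA E x k => if some_zero sigma E then 0 else sigma x + k
  | SB E k => if some_zero sigma E then 0 else k
  end.

Definition in_Ls (t : sublevel) : Prop :=
  match t with
  | SA E x _ => x \in E
  | SB _ k => 0 < k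
  end.

(* Pointwise max of a finite family (empty max = 0). *)
Definition eval_max (sigma : valuation) (n : nat) (ts : 'I_n -> sublevel) : nat :=
  \max_(i < n) eval sigma (ts i).

Definition le_L (t1 t2 : sublevel) : Prop :=
  forall sigma : valuation, eval sigma t1 <= eval sigma t2.

Definition le_L_max (n m : nat) (us : 'I_n -> sublevel) (vs : 'I_m -> sublevel) : Prop :=
  forall sigma : valuation, eval_max sigma us <= eval_max sigma vs.

(* Main.v *)
Require Import Defs.
From mathcomp Require Import all_boot.
From mathcomp Require Import zify.

Definition cst (t : sublevel) : nat :=
  match t with SA _ _ k => k | SB _ k => k end.

Lemma sz_sub {s : valuation} {E F : seq var} :
  (forall z, z \in F -> z \in E) -> some_zero s F -> some_zero s E.
Proof.
by move=> FE /hasP [z zF hz]; apply/hasP; exists z => //; apply: FE.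
Qed.

Lemma find_j m (v : 'I_m -> sublevel) sigma a :
  0 < a -> a <= \max_(j < m) eval sigma (v j) -> exists j, a <= eval sigma (v j).
Proof.
move=> a0 H.
have [/existsP [j Hj] | /existsPn Hn] := boolP [exists j, a <= eval sigma (v j)].
  by exists j.
exfalso.
have : \max_(j < m) eval sigma (v j) <= a.-1.
  apply/bigmax_leqP => j _; move: (Hn j); rewrite -ltnNge; lia.
lia.
Qed.

Theorem theorem37 (n m : nat) (u : 'I_n -> sublevel) (v : 'I_m -> sublevel) :
  (forall i, in_Ls (u i)) ->
  (forall j, in_Ls (v j)) ->
  (le_L_max u v <-> forall i : 'I_n, exists j : 'I_m, le_L (u i) (v j)).
Proof.
move=> Hu Hv; split; last first.
  move=> H sigma; rewrite /eval_max; apply/bigmax_leqP => i _.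
  have [j Hj] := H i; apply: leq_trans (Hj sigma) _; exact: leq_bigmax.
move=> H i.
have Hui := Hu i.
case Eu: (u i) Hui => [E x S | E S] /= Hui.
- pose M := \max_(j < m) cst (v j).
  pose sigma : valuation := fun y => if y == x then M.+2 else if y \in E then 1 else 0.
  have h1 : M.+2 + S <= eval_max sigma u.
    rewrite /eval_max; apply: (leq_trans _ (@leq_bigmax _ (fun k => eval sigma (u k)) i)).
    rewrite Eu /=.
    have -> : some_zero sigma E = false.
      apply/hasP => -[y yE hy]; move: hy; rewrite /sigma; case: (y == x) => //; by rewrite yE.
    by rewrite /sigma eqxx.
  have [j Hj] := find_j _ _ _ _ (isT : 0 < M.+2 + S) (leq_trans h1 (H sigma)).
  exists j.
  have cj : cst (v j) <= M by apply: leq_bigmax.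
  have Hvj := Hv j.
  case Ev: (v j) Hj cj Hvj => [F y T | F T] /=; case Fz: (some_zero sigma F) => //= Hj cj Hvj.
  + have FE : forall z, z \in F -> z \in E.
      move=> z zF; case: (eqVneq z x) => [->//|zx].
      case zE: (z \in E) => //.
      move/negbT: Fz => /hasPn/(_ z zF); by rewrite /sigma (negbTE zx) zE.
    case: (eqVneq y x) => [eyx|nyx]; last first.
      have : sigma y <= 1 by rewrite /sigma (negbTE nyx); case: (y \in E).
      lia.
    subst y.
    have ST : S <= T by move: Hj; rewrite /sigma eqxx; lia.
    move=> s /=.
    case: (boolP (some_zero s E)) => //= hE.
    rewrite (negbTE (contra (sz_sub FE) hE)).
    by rewrite leq_add2l.
  + lia.
- pose sigma : valuation := fun y => if y \in E then 1 else 0.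
  have h1 : S <= eval_max sigma u.
    rewrite /eval_max; apply: leq_trans _ (@leq_bigmax _ (fun k => eval sigma (u k)) i).
    rewrite Eu /=.
    have -> : some_zero sigma E = false.
      apply/hasP => -[y yE hy]; move: hy; by rewrite /sigma yE.
    by [].
  have [j Hj] := find_j _ _ _ _ Hui (leq_trans h1 (H sigma)).
  exists j.
  have Hvj := Hv j.
  case Ev: (v j) Hj Hvj => [F y T | F T] /=; case Fz: (some_zero sigma F) => //= Hj Hvj.
  + lia.
  + have FE : forall z, z \in F -> z \in E.
      move=> z zF; case zE: (z \in E) => //.
      move/negbT: Fz => /hasPn/(_ z zF); by rewrite /sigma zE.
    have yE := FE y Hvj.
    move: Hj; rewrite /sigma yE => Hj.
    move=> s /=.
    case: (boolP (some_zero s E)) => //= hE.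
    rewrite (negbTE (contra (sz_sub FE) hE)).
    move/hasPn: hE => /(_ y yE) hy.
    lia.
  + lia.
  + have FE : forall z, z \in F -> z \in E.
      move=> z zF; case zE: (z \in E) => //.
      move/negbT: Fz => /hasPn/(_ z zF); by rewrite /sigma zE.
    move=> s /=.
    case: (boolP (some_zero s E)) => //= hE.
    by rewrite (negbTE (contra (sz_sub FE) hE)).
Qed.
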